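(* Let $(\mathfrak{X},\pi)$, $a$, $s$, $S$, $m$ and $\kappa$ be as in the context and assume (A), (B) and (C). Then \[ |m_x(z)|\sim 1\qquad\text{for all }x\in\mathfrak{X},\ z\in\mathbb{H},\ |z|\le 2\kappa, \] and \[ \operatorname{Im}m_x(z)\sim\operatorname{Im}m_y(z)\qquad\text{for all }x,y\in\mathfrak{X},\ z\in\mathbb{H},\ |z|\le2\kappa . \]
   Context: Let $(\mathfrak{X},\pi)$ be a measure space where $\pi$ is a probability measure; $\mathcal{B}(\mathfrak{X},\mathbb{D})$ denotes bounded measurable $\mathbb{D}$-valued functions with sup norm $\|\cdot\|$, and $\|T\|$ the induced operator norm; $\langle w\rangle=\int w_x\,\pi(\mathrm{d}x)$. Let $a\in\mathcal{B}(\mathfrak{X},\mathbb{R})$, $s\in\mathcal{B}(\mathfrak{X}^2,[0,\infty))$ symmetric, $(Sw)_x=\int s_{xy}w_y\,\pi(\mathrm{d}y)$, $S_x:=(y\mapsto s_{xy})$, and $\kappa:=\|a\|+2\|S\|^{1/2}$. $m:\mathbb{H}\to\mathcal{B}(\mathfrak{X},\mathbb{H})$ is the unique solution of $-1/m(z)=z+a+Sm(z)$, $z\in\mathbb{H}$ (upper half-plane). Comparison notation: for non-negative functions $\varphi,\psi$, $\varphi\lesssim\psi$ means $\varphi\le C\psi$ for a constant $0<C<\infty$ depending only on $s$ and $a$; $\varphi\sim\psi$ means $\varphi\lesssim\psi\lesssim\varphi$. Assumptions: (A) there is a symmetric $r\in\mathcal{B}(\mathfrak{X}^2,[0,\infty))$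 with $s_{xy}\ge\int r_{xu}r_{uy}\,\pi(\mathrm{d}u)$ and $\inf_x\int r_{xy}\,\pi(\mathrm{d}y)>0$. (B) There is $K\in\mathbb{N}$ with $\inf_{x,y}s^{(K)}_{xy}>0$, $s^{(K)}$ the kernel of $S^K$. (C) $\lim_{\varepsilon\downarrow0}\inf_{x}\int\frac{\pi(\mathrm{d}y)}{\varepsilon+(a_x-a_y)^2+\langle (S_x-S_y)^2\rangle}=\infty$. *)

(* Defs.v *)
From HB Require Import structures.
From mathcomp Require Import all_boot all_order all_algebra.
From mathcomp Require Import all_classical all_reals all_analysis.
From mathcomp Require Import complex.
Set Implicit Arguments. Unset Strict Implicit. Unset Printing Implicit Defensive.
Import Order.TTheory GRing.Theory Num.Theory.
Import numFieldNormedType.Exports.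
Local Open Scope classical_set_scope.
Local Open Scope ring_scope.

Section Defs.
Context (d : measure_display) (X : measurableType d) (R : realType)
  (P : probability X R).

Definition cabs (z : R[i]) : R := ComplexField.Normc.normc z.

Definition in_H (z : R[i]) : Prop := 0 < complex.Im z.

Definition bounded_meas (w : X -> R[i]) : Prop :=
  measurable_fun setT (fun x => complex.Re (w x)) /\
  measurable_fun setT (fun x => complex.Im (w x)) /\
  exists M : R, forall x, cabs (w x) <= M.

Definition supnorm (w : X -> R[i]) : R := sup (range (fun x => cabs (w x))).

Definition supnormR (f : X -> R) : R := sup (range (fun x => `|f x|)).

Definition cint (w : X -> R[i]) : R[i] :=
  Complex (Rintegral P setT (fun y => complex.Re (w y)))
          (Rintegral P setT (fun y => complex.Im (w y))).

Definition mean (f : X -> R) : R := Rintegral P setT f.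

Definition Sop (s : X -> X -> R) (w : X -> R[i]) (x : X) : R[i] :=
  cint (fun y => (s x y)%:C%C * w y).

Definition opnorm (s : X -> X -> R) : R :=
  sup [set supnorm (Sop s w) | w in
        [set w | bounded_meas w /\ supnorm w <= 1]].

Definition kappa (a : X -> R) (s : X -> X -> R) : R :=
  supnormR a + 2 * Num.sqrt (opnorm s).

(* kernel of S^(n+1): s^(1) = s, s^(k+1)_xy = \int s^(k)_xu s_uy pi(du) *)
Fixpoint kpow (s : X -> X -> R) (n : nat) : X -> X -> R :=
  match n with
  | O => s
  | n'.+1 => fun x y => Rintegral P setT (fun u => kpow s n' x u * s u y)
  end.

Definition good_kernel (s : X -> X -> R) : Prop :=
  measurable_fun setT (fun p : X * X => s p.1 p.2) /\
  (exists M : R, forall x y, `|s x y| <= M) /\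
  (forall x y, 0 <= s x y) /\ (forall x y, s x y = s y x).

Definition assumptionA (s : X -> X -> R) : Prop :=
  exists r : X -> X -> R, good_kernel r /\
    (forall x y, Rintegral P setT (fun u => r x u * r u y) <= s x y) /\
    (exists c : R, 0 < c /\ forall x, c <= Rintegral P setT (fun y => r x y)).

Definition assumptionB (s : X -> X -> R) : Prop :=
  exists K : nat, (0 < K)%N /\
    exists c : R, 0 < c /\ forall x y, c <= kpow s K.-1 x y.

(* Assumption (C): lim_{eps -> 0+} inf_x \int 1/(eps + (a_x-a_y)^2 + <(S_x-S_y)^2>) = oo *)
Definition assumptionC (a : X -> R) (s : X -> X -> R) : Prop :=
  forall M : R, exists delta : R, 0 < delta /\
    forall eps : R, 0 < eps -> eps < delta -> forall x : X,
      (M%:E <= \int[P]_(y in setT)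
         ((eps + (a x - a y) ^+ 2
               + mean (fun u => (s x u - s y u) ^+ 2))^-1)%:E)%E.

End Defs.

(* Main.v *)
Require Import Defs.
From HB Require Import structures.
From mathcomp Require Import all_boot all_order all_algebra.
From mathcomp Require Import all_classical all_reals all_analysis.
From mathcomp Require Import complex.
Import Order.TTheory GRing.Theory Num.Theory.
Local Open Scope classical_set_scope.
Local Open Scope ring_scope.

Module Helpers.
From mathcomp Require Import measurable_realfun.
From mathcomp Require Import lra ring.
Import numFieldNormedType.Exports.
Set Implicit Arguments.
Unset Printing Implicit Defensive.

Section Base.
Context (d : measure_display) (X : measurableType d) (R : realType) {P : probability X R}.
Local Notation I f := (Rintegral P setT f).

Implicit Types f g : X -> R.
Definition bnd (f : X -> R) := exists M : R, forall x, `|f x| <= M.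

Lemma bm_int f : measurable_fun setT f -> bnd f -> P.-integrable setT (EFin \o f).
Proof.
move=> mf [M hM]; apply: measurable_bounded_integrable => //.
  by apply: (le_lt_trans (probability_le1 P measurableT)); exact: ltry.
exists M; split; first exact: num_real.
by move=> N MN x _; rewrite /= (le_trans (hM x))// ltW.
Qed.

Lemma RintE f : measurable_fun setT f -> bnd f ->
  (I f)%:E = (\int[P]_x (f x)%:E)%E.
Proof.
move=> mf bf; rewrite /Rintegral fineK//.
have := integrable_fin_num measurableT (bm_int mf bf); exact.
Qed.

Lemma Rint_cst (r : R) : I (fun _ => r) = r.
Proof. rewrite Rintegral_cst//. have h1 := probability_setT P. have -> : fine (P setT) = 1 by rewrite h1. by rewrite mulr1. Qed.

Lemma Rint_le f g : measurable_fun setT f -> bnd f -> measurable_fun setT g -> bnd g ->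
  (forall x, f x <= g x) -> I f <= I g.
Proof. by move=> mf bf mg bg fg; apply: le_Rintegral => //; apply: bm_int. Qed.

Lemma Rint_ge0 f : (forall x, 0 <= f x) -> 0 <= I f.
Proof. by move=> f0; apply: Rintegral_ge0. Qed.

Lemma Rint_add f g : measurable_fun setT f -> bnd f -> measurable_fun setT g -> bnd g ->
  I (fun x => f x + g x) = I f + I g.
Proof. by move=> mf bf mg bg; apply: RintegralD => //; apply: bm_int. Qed.

Lemma Rint_sub f g : measurable_fun setT f -> bnd f -> measurable_fun setT g -> bnd g ->
  I (fun x => f x - g x) = I f - I g.
Proof. by move=> mf bf mg bg; apply: RintegralB => //; apply: bm_int. Qed.

Lemma Rint_scal (k : R) f : measurable_fun setT f -> bnd f ->
  I (fun x => k * f x) = k * I f.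
Proof. by move=> mf bf; apply: RintegralZl => //; apply: bm_int. Qed.

Lemma Rint_bnd f M : (forall x, `|f x| <= M) -> measurable_fun setT f -> `|I f| <= M.
Proof.
move=> hM mf; have bf : bnd f by exists M.
apply: (le_trans (le_normr_Rintegral _ _)) => //; first exact: bm_int.
have -> : M = I (fun _ => M) by rewrite Rint_cst.
apply: Rint_le => //.
- exact: measurableT_comp.
- by exists M => x; rewrite normr_id.
- by exists `|M| => x.
Qed.

Lemma le_int_nm (f g : X -> \bar R) : (forall x, 0 <= f x)%E -> (forall x, f x <= g x)%E ->
  (\int[P]_x f x <= \int[P]_x g x)%E.
Proof.
move=> f0 fg; have g0 : forall x, (0 <= g x)%E by move=> x; exact: le_trans (f0 x) (fg x).
rewrite !ge0_integralTE//; apply: le_ereal_sup => _ [h hf <-]; exists h => //.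
by move=> x; apply: le_trans (hf x) (fg x).
Qed.


Definition jm (F : X -> X -> R) := measurable_fun setT (fun p : X * X => F p.1 p.2).

Lemma sec1 F x : jm F -> measurable_fun setT (F x).
Proof. by move=> mF; exact: (measurable_fun_pair2 x mF). Qed.

Lemma sec2 F y : jm F -> measurable_fun setT (fun x => F x y).
Proof. by move=> mF; exact: (measurable_fun_pair1 y mF). Qed.

Lemma jm_l f : measurable_fun setT f -> jm (fun x _ => f x).
Proof. by move=> mf; rewrite /jm /=; exact: measurableT_comp mf measurable_fst. Qed.

Lemma jm_r f : measurable_fun setT f -> jm (fun _ y => f y).
Proof. by move=> mf; rewrite /jm /=; exact: measurableT_comp mf measurable_snd. Qed.

Lemma jm_swap F : jm F -> jm (fun x y => F y x).
Proof. by move=> mF; rewrite /jm /=; have := measurableT_comp mF (@measurable_swap _ _ X X); exact. Qed.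

Lemma jm_mul F G : jm F -> jm G -> jm (fun x y => F x y * G x y).
Proof. by move=> mF mG; exact: measurable_funM. Qed.

Lemma jm_add F G : jm F -> jm G -> jm (fun x y => F x y + G x y).
Proof. by move=> mF mG; exact: measurable_funD. Qed.

Lemma jm_sub F G : jm F -> jm G -> jm (fun x y => F x y - G x y).
Proof. by move=> mF mG; exact: measurable_funB. Qed.

Definition kb (F : X -> X -> R) := exists M : R, forall x y, 0 <= F x y <= M.

Lemma kb_bnd F x : kb F -> bnd (F x).
Proof.
case=> M hM; exists M => y; have /andP[h0 h1] := hM x y.
by rewrite ger0_norm.
Qed.

Lemma kb_bnd2 F y : kb F -> bnd (fun x => F x y).
Proof.
case=> M hM; exists M => x; have /andP[h0 h1] := hM x y.
by rewrite ger0_norm.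
Qed.

Lemma par_meas F : jm F -> kb F -> measurable_fun setT (fun x => I (F x)).
Proof.
move=> mF bF; apply/measurable_EFinP.
have mF' : measurable_fun setT (fun p : X * X => (F p.1 p.2)%:E).
  exact/measurable_EFinP.
have h0 : forall p : X * X, (0 <= (F p.1 p.2)%:E)%E.
  by move=> p; case: bF => M hM; have /andP[] := hM p.1 p.2; rewrite lee_fin.
have := @measurable_fun_fubini_tonelli_F _ _ X X R P _ mF' h0.
rewrite /fubini_F /=.
have -> : (fun x => \int[P]_y (F (x, y).1 (x, y).2)%:E)%E = EFin \o (fun x => I (F x)).
  apply/funext => x /=; rewrite RintE//; first exact: sec1.
  exact: kb_bnd.
by [].
Qed.

Lemma fub F : jm F -> kb F -> I (fun x => I (F x)) = I (fun y => I (fun x => F x y)).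
Proof.
move=> mF bF; have [M hM] := bF.
have mF' : measurable_fun setT (fun p : X * X => (F p.1 p.2)%:E).
  exact/measurable_EFinP.
have h0 : forall p : X * X, (0 <= (F p.1 p.2)%:E)%E.
  by move=> p; have /andP[] := hM p.1 p.2; rewrite lee_fin.
have bI : forall x, `|I (F x)| <= M.
  move=> x; apply: Rint_bnd; last exact: sec1.
  by move=> y; have /andP[a b] := hM x y; rewrite ger0_norm.
have bI2 : forall y, `|I (fun x => F x y)| <= M.
  move=> y; apply: Rint_bnd; last exact: sec2.
  by move=> x; have /andP[a b] := hM x y; rewrite ger0_norm.
apply: EFin_inj.
rewrite RintE; [|exact: par_meas|by exists M].
have mG : jm (fun x y => F y x) by exact: jm_swap.
have bG : kb (fun x y => F y x) by exists M => x y; exact: hM.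
rewrite RintE; [|by have := par_meas mG bG|by exists M].
transitivity (\int[P]_x \int[P]_y (F x y)%:E)%E.
  apply: eq_integral => x _; rewrite RintE//; [exact: sec1|exact: kb_bnd].
transitivity (\int[P]_y \int[P]_x (F x y)%:E)%E.
  exact: (sfinite_Fubini P P (fun p : X * X => (F p.1 p.2)%:E)).
apply: eq_integral => y _; rewrite RintE//; [exact: sec2|exact: kb_bnd2].
Qed.


Definition gd f := measurable_fun setT f /\ bnd f.

Lemma gd_cst (r : R) : gd (fun _ => r).
Proof. by split; [exact: measurable_cst|exists `|r|]. Qed.

Lemma gd_add f g : gd f -> gd g -> gd (fun x => f x + g x).
Proof.
move=> [mf [M hM]] [mg [N hN]]; split; first exact: measurable_funD.
by exists (M + N) => x; rewrite (le_trans (ler_normD _ _))// lerD.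
Qed.

Lemma gd_mul f g : gd f -> gd g -> gd (fun x => f x * g x).
Proof.
move=> [mf [M hM]] [mg [N hN]]; split; first exact: measurable_funM.
exists (M * N) => x; rewrite normrM ler_pM//.
Qed.

Lemma gd_opp f : gd f -> gd (fun x => - f x).
Proof.
move=> [mf [M hM]]; split; first exact: measurable_funN.
by exists M => x; rewrite normrN.
Qed.

Lemma gd_sub f g : gd f -> gd g -> gd (fun x => f x - g x).
Proof. by move=> hf hg; apply: gd_add => //; exact: gd_opp. Qed.

Lemma gd_scal (k : R) f : gd f -> gd (fun x => k * f x).
Proof. by move=> hf; apply: gd_mul => //; exact: gd_cst. Qed.

Lemma IgD f g : gd f -> gd g -> I (fun x => f x + g x) = I f + I g.
Proof. by move=> [? ?] [? ?]; exact: Rint_add. Qed.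

Lemma IgB f g : gd f -> gd g -> I (fun x => f x - g x) = I f - I g.
Proof. by move=> [? ?] [? ?]; exact: Rint_sub. Qed.

Lemma IgZ (k : R) f : gd f -> I (fun x => k * f x) = k * I f.
Proof. by move=> [? ?]; exact: Rint_scal. Qed.

Lemma IgZr (k : R) f : gd f -> I (fun x => f x * k) = I f * k.
Proof.
move=> hf; rewrite mulrC -IgZ//; apply: eq_Rintegral => x _; exact: mulrC.
Qed.

Lemma Ig_le f g : gd f -> gd g -> (forall x, f x <= g x) -> I f <= I g.
Proof. by move=> [? ?] [? ?]; exact: Rint_le. Qed.

Lemma Ig_norm f : gd f -> `|I f| <= I (fun x => `|f x|).
Proof.
move=> [mf bf]; apply: le_normr_Rintegral => //; exact: bm_int.
Qed.

Lemma gd_norm f : gd f -> gd (fun x => `|f x|).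
Proof.
move=> [mf [M hM]]; split; first exact: measurableT_comp.
by exists M => x; rewrite normr_id.
Qed.

Lemma gd_par F : jm F -> kb F -> gd (fun x => I (F x)).
Proof.
move=> mF bF; split; first exact: par_meas.
have [M hM] := bF; exists M => x; apply: Rint_bnd; last exact: sec1.
by move=> y; have /andP[h1 h2] := hM x y; rewrite ger0_norm.
Qed.

Lemma gd_sq f : gd f -> gd (fun x => f x ^+ 2).
Proof.
move=> hf; have -> : (fun x => f x ^+ 2) = (fun x => f x * f x).
  by apply/funext => x; rewrite expr2.
exact: gd_mul.
Qed.

Lemma gd_comp f (h : R -> R) : gd f -> measurable_fun setT h -> bnd (fun x => h (f x)) ->
  gd (fun x => h (f x)).
Proof. by move=> [mf _] mh bh; split => //; exact: measurableT_comp. Qed.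

Lemma Ig_cst_le f (k : R) : gd f -> (forall x, k <= f x) -> k <= I f.
Proof.
move=> hf hk; rewrite -[k]Rint_cst; apply: Ig_le => //; exact: gd_cst.
Qed.

End Base.

Lemma amgm_sq (R : realType) (X A B : R) : 0 <= X -> 0 <= A -> 0 <= B ->
  (forall t, 0 < t -> X <= (t * A + B / t) / 2) -> X ^+ 2 <= A * B.
Proof.
move=> X0 A0 B0 h.
have [->|Xp] := eqVneq X 0; first by rewrite expr0n /= mulr_ge0.
have Xg : 0 < X by rewrite lt_def Xp X0.
have [A0'|Ap] := eqVneq A 0.
  have := h ((B + 1) / X) (divr_gt0 (ltr_pwDr ltr01 B0) Xg).
  rewrite A0' mulr0 add0r invf_div => hh.
  have hY : B * (X / (B + 1)) <= X.
    rewrite mulrA ler_pdivrMr ?ltr_pwDr// mulrDr mulr1 mulrC lerDl; exact: ltW.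
  exfalso; lra.
have Ag : 0 < A by rewrite lt_def Ap A0.
have := h (X / A) (divr_gt0 Xg Ag).
have -> : X / A * A = X by rewrite divfK.
have -> : B / (X / A) = (A * B) / X.
  by rewrite invf_div mulrA [B * A]mulrC.
set Y := A * B / X => hh.
have hY : X <= Y by lra.
have -> : A * B = Y * X by rewrite /Y divfK.
by rewrite expr2 ler_pM2r.
Qed.

Section Base2.
Context (d : measure_display) (X : measurableType d) (R : realType) {P : probability X R}.
Local Notation I f := (Rintegral P setT f).
Local Notation gd := (@gd _ X R).
Implicit Types f g : X -> R.

Lemma amgm_pt (t u w : R) : 0 < t -> u * w <= t / 2 * u ^+ 2 + 1 / (2 * t) * w ^+ 2.
Proof.
move=> t0.
have h : 2 * t * (u * w) <= t ^+ 2 * u ^+ 2 + w ^+ 2.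
  have := sqr_ge0 (t * u - w); rewrite sqrrB exprMn; lra.
have -> : t / 2 * u ^+ 2 + 1 / (2 * t) * w ^+ 2 = (t ^+ 2 * u ^+ 2 + w ^+ 2) / (2 * t).
  by field; rewrite gt_eqF.
rewrite ler_pdivlMr ?mulr_gt0//; lra.
Qed.

Lemma CS f g : gd f -> gd g ->
  (I (fun x => f x * g x)) ^+ 2 <= I (fun x => f x ^+ 2) * I (fun x => g x ^+ 2).
Proof.
move=> hf hg; rewrite -real_normK ?num_real//.
have hfg : gd (fun x => f x * g x) by exact: gd_mul.
have hf2 : gd (fun x => f x ^+ 2) by rewrite /=; under eq_fun do rewrite expr2; exact: gd_mul.
have hg2 : gd (fun x => g x ^+ 2) by under eq_fun do rewrite expr2; exact: gd_mul.
apply: amgm_sq => //.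
- by apply: Rint_ge0 => x; exact: sqr_ge0.
- by apply: Rint_ge0 => x; exact: sqr_ge0.
move=> t t0.
apply: (le_trans (Ig_norm hfg)).
have -> : (t * I (fun x => f x ^+ 2) + I (fun x => g x ^+ 2) / t) / 2 =
  I (fun x => t / 2 * f x ^+ 2 + 1 / (2 * t) * g x ^+ 2).
  rewrite IgD; [|exact: gd_scal|exact: gd_scal].
  rewrite !IgZ//; field; rewrite gt_eqF//.
apply: Ig_le.
- exact: gd_norm.
- by apply: gd_add; exact: gd_scal.
move=> x; rewrite normrM -(real_normK (num_real (f x))) -(real_normK (num_real (g x))).
exact: amgm_pt.
Qed.

End Base2.
Section T.
Variable R : realType.
Lemma mulRe (r : R) (w : R[i]) : complex.Re ((r%:C)%C * w) = r * complex.Re w.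
Proof. case: w => u t /=. ring. Qed.
Lemma mulIm (r : R) (w : R[i]) : complex.Im ((r%:C)%C * w) = r * complex.Im w.
Proof. case: w => u t /=. ring. Qed.
Lemma invRe (w : R[i]) : complex.Re (- w^-1) = - complex.Re w / (complex.Re w ^+2 + complex.Im w ^+ 2).
Proof. case: w => u t /=. rewrite mulNr. done. Qed.
Lemma invIm (w : R[i]) : complex.Im (- w^-1) = complex.Im w / (complex.Re w ^+2 + complex.Im w ^+ 2).
Proof. case: w => u t /=. rewrite opprK. done. Qed.
Lemma addRe (u w : R[i]) : complex.Re (u + w) = complex.Re u + complex.Re w.
Proof. by case: u; case: w. Qed.
Lemma addIm (u w : R[i]) : complex.Im (u + w) = complex.Im u + complex.Im w.
Proof. by case: u; case: w. Qed.
End T.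

Lemma gmeas (R : realType) (w0 : R) : 0 < w0 -> measurable_fun setT (fun t : R => (Num.max t w0)^-1).
Proof.
move=> w00; apply: continuous_measurable_fun => t.
have hm : {for t, continuous (fun t : R => Num.max t w0)}.
  apply: (@continuous_max _ _ id (fun=> w0)); first by move=> ?; exact: cvg_id.
  exact: cst_continuous.
have hn : Num.max t w0 != 0 by rewrite gt_eqF// (lt_le_trans w00)// le_max lexx orbT.
exact: (@continuousV _ _ (fun u => Num.max u w0) t hn hm).
Qed.

Lemma sq_le (R : realType) (A T : R) : `|A| <= T -> A ^+ 2 <= T ^+ 2.
Proof. move=> /ler_normlP [h1 h2]; nra. Qed.

Lemma inv_le (R : realType) (u L : R) : 0 < u -> 0 < L -> 1 / u <= L -> 1 / L <= u.
Proof. by move=> u0 L0; rewrite !ler_pdivrMr// mulrC. Qed.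

Lemma amgm1 (R : realType) (t W : R) : 0 < t -> 0 < W -> 1 <= t / 2 * W^-1 + 1 / (2 * t) * W.
Proof.
move=> t0 W0; rewrite -subr_ge0.
have -> : t / 2 * W^-1 + 1 / (2 * t) * W - 1 = (t - W) ^+ 2 / (2 * t * W).
  by field; rewrite !gt_eqF.
by apply: divr_ge0; [exact: sqr_ge0|rewrite !mulr_ge0// ltW].
Qed.

Lemma sq2 (R : realType) (u w : R) : (u + w) ^+ 2 <= 2 * u ^+ 2 + 2 * w ^+ 2.
Proof. have := sqr_ge0 (u - w); rewrite sqrrB sqrrD; lra. Qed.

Lemma sq3 (R : realType) (u v w : R) : (u + v + w) ^+ 2 <= 2 * u ^+ 2 + 4 * v ^+ 2 + 4 * w ^+ 2.
Proof.
have h1 := sq2 _ u (v + w); have h2 := sq2 _ v w; rewrite -addrA; lra.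
Qed.

Lemma cabsE (R : realType) (w : R[i]) :
  cabs w = Num.sqrt (complex.Re w ^+ 2 + complex.Im w ^+ 2).
Proof. by case: w. Qed.

Lemma Re_le_cabs (R : realType) (w : R[i]) : `|complex.Re w| <= cabs w.
Proof.
rewrite cabsE -sqrtr_sqr ler_wsqrtr// lerDl; exact: sqr_ge0.
Qed.

Lemma Im_le_cabs (R : realType) (w : R[i]) : `|complex.Im w| <= cabs w.
Proof.
rewrite cabsE -sqrtr_sqr ler_wsqrtr// lerDr; exact: sqr_ge0.
Qed.

Section Kp.
Context (d : measure_display) (X : measurableType d) (R : realType) (P : probability X R).
Local Notation I f := (Rintegral P setT f).
Local Notation gd := (@gd _ X R).
Local Notation jm := (@jm _ X R).
Local Notation kb := (@kb _ X R).
Context (s : X -> X -> R) (ms : jm s) (sig : R) (hs : forall x y, 0 <= s x y <= sig).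

Lemma kpow_prop n : (forall x, measurable_fun setT (kpow P s n x)) /\
  (forall x y, 0 <= kpow P s n x y <= sig ^+ n.+1).
Proof.
elim: n => [|n [IH1 IH2]].
  by split => [x|x y]; [exact: sec1|rewrite expr1; exact: hs].
have jF : forall x, jm (fun y u => kpow P s n x u * s u y).
  by move=> x; apply: jm_mul; [exact: jm_r|exact: jm_swap].
have kF : forall x, kb (fun y u => kpow P s n x u * s u y).
  move=> x; exists (sig ^+ n.+1 * sig) => y u.
  have /andP[h1 h2] := IH2 x u; have /andP[h3 h4] := hs u y.
  by rewrite mulr_ge0//= ler_pM.
split => [x|x y].
  have h := par_meas (jF x) (kF x); exact: h.
have [M hM] := kF x.
rewrite /= exprS mulrC; apply/andP; split.
  by apply: Rint_ge0 => u; have /andP[h1 h2] := IH2 x u; have /andP[h3 h4] := hs u y; exact: mulr_ge0.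
apply: le_trans (ler_norm _) _; apply: Rint_bnd.
  move=> u; have /andP[h1 h2] := IH2 x u; have /andP[h3 h4] := hs u y.
  by rewrite ger0_norm ?mulr_ge0// ler_pM.
by apply: measurable_funM; [exact: IH1|exact: sec2].
Qed.

End Kp.

Section Fix.
Context (d : measure_display) (X : measurableType d) (R : realType) (P : probability X R).
Local Notation I f := (Rintegral P setT f).
Local Notation gd := (@gd _ X R).
Local Notation jm := (@jm _ X R).
Local Notation kb := (@kb _ X R).
Context (a : X -> R) (s : X -> X -> R).
Context (ma : measurable_fun setT a) (Ma : R) (hMa : forall x, `|a x| <= Ma).
Context (ms : jm s) (sig : R) (hs : forall x y, 0 <= s x y <= sig)
  (ssym : forall x y, s x y = s y x).
Context (z : R[i]) (w : X -> R[i]) (hz : 0 < complex.Im z).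
Context (mp : measurable_fun setT (fun x => complex.Re (w x)))
  (mv : measurable_fun setT (fun x => complex.Im (w x)))
  (Mw : R) (hMw : forall x, cabs (w x) <= Mw).
Context (hwH : forall x, 0 < complex.Im (w x)).
Context (hweq : forall x, - (w x)^-1 = z + (a x)%:C%C + Sop P s w x).

Let p x := complex.Re (w x).
Let v x := complex.Im (w x).
Let q x := p x ^+ 2 + v x ^+ 2.
Let SR x := I (fun y => s x y * p y).
Let SV x := I (fun y => s x y * v y).

Lemma sig0 : 0 <= sig.
Proof. by have /andP[h1 h2] := hs point point; exact: le_trans h2. Qed.

Lemma gdp : gd p.
Proof. split => //; exists Mw => x; rewrite /p; apply: le_trans (hMw x); exact: Re_le_cabs. Qed.

Lemma gdv : gd v.
Proof. split => //; exists Mw => x; rewrite /v; apply: le_trans (hMw x); exact: Im_le_cabs. Qed.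

Lemma gds x : gd (s x).
Proof. split; first exact: sec1. exists sig => y; have /andP[h1 h2] := hs x y; by rewrite ger0_norm. Qed.

Lemma q_gt0 x : 0 < q x.
Proof.
have h1 : 0 < v x ^+ 2 by apply: exprn_gt0; exact: hwH.
have h2 := sqr_ge0 (p x); rewrite /q; lra.
Qed.

Lemma eqR x : complex.Re z + a x + SR x = - p x / q x.
Proof.
have h := congr1 (@complex.Re R) (hweq x); rewrite invRe !addRe /= in h.
rewrite /q /p /v h /SR; congr (_ + _).
by apply: eq_Rintegral => y _; rewrite mulRe.
Qed.

Lemma eqI x : complex.Im z + SV x = v x / q x.
Proof.
have h := congr1 (@complex.Im R) (hweq x); rewrite invIm !addIm /= addr0 in h.
rewrite /q /p /v h /SV; congr (_ + _).
by apply: eq_Rintegral => y _; rewrite mulIm.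
Qed.

Lemma invq x : 1 / q x = (complex.Re z + a x + SR x) ^+ 2 + (complex.Im z + SV x) ^+ 2.
Proof.
rewrite eqR eqI; have := q_gt0 x; rewrite /q => hq.
by field; rewrite gt_eqF.
Qed.

Lemma veq x : v x = q x * (complex.Im z + SV x).
Proof. by rewrite eqI mulrC divfK// gt_eqF// q_gt0. Qed.

Lemma SV_ge0 x : 0 <= SV x.
Proof.
apply: Rint_ge0 => y; have /andP[h1 _] := hs x y; apply: mulr_ge0 => //.
exact: ltW (hwH y).
Qed.

Lemma SV_le x : SV x <= sig * Mw.
Proof.
apply: le_trans (ler_norm (SV x)) _; apply: Rint_bnd.
  move=> y; rewrite normrM; apply: ler_pM => //.
  - by have /andP[h1 h2] := hs x y; rewrite ger0_norm.
  - by rewrite /v; apply: le_trans (hMw y); exact: Im_le_cabs.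
by apply: measurable_funM => //; exact: sec1.
Qed.

Lemma SR_le x : `|SR x| <= sig * Mw.
Proof.
apply: Rint_bnd.
  move=> y; rewrite normrM; apply: ler_pM => //.
  - by have /andP[h1 h2] := hs x y; rewrite ger0_norm.
  - by rewrite /p; apply: le_trans (hMw y); exact: Re_le_cabs.
by apply: measurable_funM => //; exact: sec1.
Qed.

Lemma gdq : gd q.
Proof. by apply: gd_add; apply: gd_sq; [exact: gdp|exact: gdv]. Qed.

Lemma q_ge0 x : 0 <= q x.
Proof. exact: ltW (q_gt0 x). Qed.

Lemma v_le x : v x <= Mw.
Proof.
apply: le_trans (ler_norm _) _; rewrite /v; apply: le_trans (hMw x).
exact: Im_le_cabs.
Qed.

Lemma v_ge0 x : 0 <= v x.
Proof. exact: ltW (hwH x). Qed.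

Context (r : X -> X -> R) (mr : jm r) (rM : R) (hr : forall x y, 0 <= r x y <= rM)
  (rsym : forall x y, r x y = r y x)
  (hrs : forall x y, I (fun u => r x u * r u y) <= s x y)
  (c : R) (c0 : 0 < c) (hc : forall x, c <= I (r x)).

Let L1 := (`|complex.Re z| + Ma + sig * Mw) ^+ 2 + (complex.Im z + sig * Mw) ^+ 2 + 1.

Lemma L1_gt0 : 0 < L1.
Proof.
have := sqr_ge0 (`|complex.Re z| + Ma + sig * Mw).
have := sqr_ge0 (complex.Im z + sig * Mw); rewrite /L1; lra.
Qed.

Lemma q_lb x : 1 / L1 <= q x.
Proof.
have h := invq x.
have hA : `|complex.Re z + a x + SR x| <= `|complex.Re z| + Ma + sig * Mw.
  rewrite (le_trans (ler_normD _ _))// lerD//; last exact: SR_le.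
  by rewrite (le_trans (ler_normD _ _))// lerD.
have hB : `|complex.Im z + SV x| <= complex.Im z + sig * Mw.
  rewrite ger0_norm; first by rewrite lerD2l SV_le.
  by rewrite addr_ge0 ?SV_ge0// ltW.
have h1 := @sq_le _ _ _ hA; have h2 := @sq_le _ _ _ hB.
apply: inv_le; [exact: q_gt0|exact: L1_gt0|].
by rewrite h /L1; lra.
Qed.

Let v0 := complex.Im z / L1.

Lemma v0_gt0 : 0 < v0.
Proof. by rewrite divr_gt0// L1_gt0. Qed.

Lemma v_lb x : v0 <= v x.
Proof.
rewrite veq /v0.
have h1 := q_lb x; have h2 := SV_ge0 x; have h3 := q_ge0 x.
have : complex.Im z / L1 = 1 / L1 * complex.Im z by rewrite mulrC mul1r.
move=> ->; rewrite mulrDr.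
have : 1 / L1 * complex.Im z <= q x * complex.Im z by rewrite ler_wpM2r// ltW.
have : 0 <= q x * SV x by rewrite mulr_ge0.
lra.
Qed.

Let kW := fun x u => r x u * v u.

Lemma jm_kW : jm kW.
Proof. by apply: jm_mul => //; exact: jm_r. Qed.

Lemma kb_kW : kb kW.
Proof.
exists (rM * Mw) => x u; have /andP[h1 h2] := hr x u.
by rewrite /kW mulr_ge0 ?v_ge0//= ler_pM ?v_ge0// v_le.
Qed.

Let W x := I (kW x).

Lemma gdW : gd W.
Proof. exact: gd_par jm_kW kb_kW. Qed.

Lemma gdr x : gd (r x).
Proof.
split; first exact: sec1.
by exists rM => y; have /andP[h1 h2] := hr x y; rewrite ger0_norm.
Qed.

Let w0 := c * v0.

Lemma w0_gt0 : 0 < w0.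
Proof. by rewrite mulr_gt0// v0_gt0. Qed.

Lemma W_lb x : w0 <= W x.
Proof.
apply: (@le_trans _ _ (I (fun u => v0 * r x u))).
  rewrite IgZ; last exact: gdr.
  by rewrite /w0 mulrC ler_wpM2l// ltW// v0_gt0.
apply: Ig_le; [exact: gd_scal (gdr x)|exact: gd_mul (gdr x) gdv|].
move=> u; rewrite /kW mulrC; have /andP[h1 h2] := hr x u.
by rewrite ler_wpM2l// v_lb.
Qed.

Let G x := (Num.max (W x) w0)^-1.

Lemma G_eq x : G x = (W x)^-1.
Proof. by rewrite /G max_l// W_lb. Qed.

Lemma GW x : G x * W x = 1.
Proof. by rewrite G_eq mulVf// gt_eqF// (lt_le_trans w0_gt0 (W_lb x)). Qed.

Lemma G_ge0 x : 0 <= G x.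
Proof. by rewrite G_eq invr_ge0 (le_trans (ltW w0_gt0) (W_lb x)). Qed.

Lemma G_le x : G x <= 1 / w0.
Proof.
rewrite G_eq div1r lef_pV2 ?posrE ?w0_gt0 ?W_lb//.
exact: lt_le_trans w0_gt0 (W_lb x).
Qed.

Lemma G_meas : measurable_fun setT G.
Proof.
have := measurableT_comp (@gmeas _ _ w0_gt0) (proj1 gdW); exact.
Qed.

Lemma gdG : gd G.
Proof.
split; first exact: G_meas.
by exists (1 / w0) => x; rewrite ger0_norm ?G_ge0 ?G_le.
Qed.

Lemma W_ge0 x : 0 <= W x.
Proof. exact: le_trans (ltW w0_gt0) (W_lb x). Qed.

Lemma W_le x : W x <= rM * Mw.
Proof.
apply: le_trans (ler_norm _) _; apply: Rint_bnd; last exact: (sec1 x jm_kW).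
move=> u; have /andP[h1 h2] := hr x u.
by rewrite /kW normrM ger0_norm// ger0_norm ?v_ge0// ler_pM ?v_ge0// v_le.
Qed.

Let RW y := I (fun u => r y u * W u).

Lemma RW_le y : RW y <= SV y.
Proof.
have e1 : RW y = I (fun u => I (fun t => r y u * (r u t * v t))).
  apply: eq_Rintegral => u _; rewrite IgZ //.
  by apply: gd_mul; [exact: gdr|exact: gdv].
have jF : jm (fun u t => r y u * (r u t * v t)).
  apply: jm_mul; first by apply: jm_l; exact: sec1.
  by apply: jm_mul => //; exact: jm_r.
have kF : kb (fun u t => r y u * (r u t * v t)).
  exists (rM * (rM * Mw)) => u t; have /andP[h1 h2] := hr y u.
  have /andP[h3 h4] := hr u t; have h5 := v_ge0 t; have h6 := v_le t.
  rewrite !mulr_ge0//= ler_pM ?mulr_ge0// ler_pM//.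
rewrite e1 (fub jF kF).
have jF' : jm (fun t u => r y u * (r u t * v t)) by exact: jm_swap.
have kF' : kb (fun t u => r y u * (r u t * v t)).
  by case: kF => M hM; exists M => t u; exact: hM.
apply: Ig_le; first exact: gd_par jF' kF'.
  by apply: gd_mul; [exact: gds|exact: gdv].
move=> t.
have -> : I (fun u => r y u * (r u t * v t)) = I (fun u => r y u * r u t) * v t.
  rewrite -IgZr; first by apply: eq_Rintegral => u _; rewrite mulrA.
  apply: gd_mul; first exact: gdr.
  by split; [exact: sec2|exists rM => u; have /andP[h3 h4] := hr u t; rewrite ger0_norm].
by rewrite ler_wpM2r ?v_ge0.
Qed.

Lemma qSV y : q y * SV y <= v y.
Proof.
rewrite [in X in _ <= X]veq mulrDr lerDr; apply: mulr_ge0; [exact: q_ge0|exact: ltW].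
Qed.

Lemma RW_ge0 y : 0 <= RW y.
Proof. apply: Rint_ge0 => u; have /andP[h1 _] := hr y u; exact: mulr_ge0 h1 (W_ge0 u). Qed.

Let Ainv y := I (fun x => r y x * G x).

Lemma Ainv_ge0 y : 0 <= Ainv y.
Proof. apply: Rint_ge0 => u; have /andP[h1 _] := hr y u; exact: mulr_ge0 h1 (G_ge0 u). Qed.

Lemma rho_sq y : (I (r y)) ^+ 2 <= Ainv y * RW y.
Proof.
apply: amgm_sq; [|exact: Ainv_ge0|exact: RW_ge0|].
  by apply: Rint_ge0 => u; have /andP[h1 _] := hr y u.
move=> t t0.
have gA : gd (fun x => r y x * G x) by apply: gd_mul; [exact: gdr|exact: gdG].
have gB : gd (fun x => r y x * W x) by apply: gd_mul; [exact: gdr|exact: gdW].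
have -> : (t * Ainv y + RW y / t) / 2 =
    I (fun x => t / 2 * (r y x * G x) + 1 / (2 * t) * (r y x * W x)).
  rewrite IgD; [|exact: gd_scal|exact: gd_scal].
  rewrite !IgZ //; rewrite /Ainv /RW; field; rewrite gt_eqF//.
apply: Ig_le; first exact: gdr.
  by apply: gd_add; exact: gd_scal.
move=> x; have /andP[h1 _] := hr y x.
have Wp : 0 < W x by exact: lt_le_trans w0_gt0 (W_lb x).
have -> : t / 2 * (r y x * G x) + 1 / (2 * t) * (r y x * W x) =
    r y x * (t / 2 * (W x)^-1 + 1 / (2 * t) * W x) by rewrite G_eq; ring.
by rewrite ler_peMr// amgm1.
Qed.

Lemma vAinv : I (fun y => v y * Ainv y) = 1.
Proof.
have jF : jm (fun y x => v y * (r y x * G x)).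
  apply: jm_mul; first exact: jm_l.
  apply: jm_mul => //; apply: jm_r; exact: G_meas.
have kF : kb (fun y x => v y * (r y x * G x)).
  exists (Mw * (rM * (1 / w0))) => y x; have /andP[h1 h2] := hr y x.
  have h3 := G_ge0 x; have h4 := G_le x; have h5 := v_ge0 y; have h6 := v_le y.
  by rewrite !mulr_ge0//= ler_pM ?mulr_ge0// ler_pM.
have e1 : I (fun y => v y * Ainv y) = I (fun y => I (fun x => v y * (r y x * G x))).
  apply: eq_Rintegral => y _; rewrite IgZ //.
  by apply: gd_mul; [exact: gdr|exact: gdG].
rewrite e1 (fub jF kF) -[RHS](@Rint_cst _ _ _ P).
apply: eq_Rintegral => x _.
rewrite -(GW x) mulrC /W -IgZr; last exact: gd_mul (gdr x) gdv.
by apply: eq_Rintegral => y _; rewrite /kW rsym; ring.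
Qed.

Lemma Iq_le : I q <= 1 / c ^+ 2.
Proof.
have gR : gd (fun y => I (r y)).
  apply: gd_par => //; exists rM => x y; exact: hr.
have gA : gd Ainv.
  apply: gd_par.
    by apply: jm_mul => //; apply: jm_r; exact: G_meas.
  exists (rM * (1 / w0)) => y x; have /andP[h1 h2] := hr y x.
  have h3 := G_ge0 x; have h4 := G_le x.
  by rewrite !mulr_ge0//= ler_pM.
have h1 : I (fun y => c ^+ 2 * q y) <= I (fun y => q y * (I (r y)) ^+ 2).
  apply: Ig_le; first exact: gd_scal gdq.
    by apply: gd_mul; [exact: gdq|exact: gd_sq].
  move=> y; rewrite mulrC ler_wpM2l ?q_ge0//.
  by have := hc y; have := c0; nra.
have h2 : I (fun y => q y * (I (r y)) ^+ 2) <= I (fun y => v y * Ainv y).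
  apply: Ig_le.
  - by apply: gd_mul; [exact: gdq|exact: gd_sq].
  - exact: gd_mul gdv gA.
  move=> y; apply: (le_trans (ler_wpM2l (q_ge0 y) (rho_sq y))).
  rewrite mulrCA [v y * _]mulrC ler_wpM2l ?Ainv_ge0//.
  apply: le_trans (qSV y); rewrite ler_wpM2l ?q_ge0//; exact: RW_le.
rewrite IgZ in h1; last exact: gdq.
rewrite vAinv in h2.
have hc2 : 0 < c ^+ 2 by rewrite exprn_gt0.
rewrite ler_pdivlMr// mulrC; exact: le_trans h1 h2.
Qed.

Let B2 := 1 / c ^+ 2.
Let K1 := 4 * Num.max 1 B2.

Lemma dS (f : X -> R) x y : gd f ->
  I (fun t => s y t * f t) - I (fun t => s x t * f t) =
  I (fun t => (s y t - s x t) * f t).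
Proof.
move=> hf; rewrite -IgB; [|exact: gd_mul (gds y) hf|exact: gd_mul (gds x) hf].
by apply: eq_Rintegral => t _; rewrite mulrBl.
Qed.

Lemma dS_sq (f : X -> R) x y : gd f ->
  (I (fun t => s y t * f t) - I (fun t => s x t * f t)) ^+ 2 <=
  I (fun u => (s x u - s y u) ^+ 2) * I (fun t => f t ^+ 2).
Proof.
move=> hf; rewrite dS//.
have -> : I (fun u => (s x u - s y u) ^+ 2) = I (fun u => (s y u - s x u) ^+ 2).
  by apply: eq_Rintegral => u _; rewrite -sqrrN opprB.
apply: CS => //; exact: gd_sub (gds y) (gds x).
Qed.

Lemma pt_C x y :
  (1 / q x + (a x - a y) ^+ 2 + I (fun u => (s x u - s y u) ^+ 2))^-1 <= K1 * q y.
Proof.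
set beta := I (fun u => (s x u - s y u) ^+ 2).
have b0 : 0 <= beta by apply: Rint_ge0 => u; exact: sqr_ge0.
have qx := q_gt0 x; have qy := q_gt0 y.
have iqx : 0 < 1 / q x by rewrite divr_gt0.
have D0 := sqr_ge0 (a x - a y).
have E0 : 0 < 1 / q x + (a x - a y) ^+ 2 + beta by lra.
have hR := dS_sq x y gdp; have hV := dS_sq x y gdv; rewrite -/beta in hR hV.
have hIq : I (fun t => p t ^+ 2) + I (fun t => v t ^+ 2) <= B2.
  by rewrite -IgD; [exact: Iq_le|exact: gd_sq gdp|exact: gd_sq gdv].
set Rp := I (fun t => p t ^+ 2) in hR hIq.
set Rv := I (fun t => v t ^+ 2) in hV hIq.
set dR := I (fun t => s y t * p t) - I (fun t => s x t * p t) in hR.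
set dV := I (fun t => s y t * v t) - I (fun t => s x t * v t) in hV.
have ey : complex.Re z + a y + SR y = (complex.Re z + a x + SR x) + (a y - a x) + dR.
  by rewrite /dR /SR; ring.
have ey2 : complex.Im z + SV y = (complex.Im z + SV x) + dV.
  by rewrite /dV /SV; ring.
have h1 : 1 / q y <= 2 * (1 / q x) + 4 * (a x - a y) ^+ 2 + 4 * (beta * Rp) + 2 * (beta * Rv).
  rewrite invq ey ey2 (invq x).
  have := sq3 _ (complex.Re z + a x + SR x) (a y - a x) dR.
  have := sq2 _ (complex.Im z + SV x) dV.
  have -> : (a y - a x) ^+ 2 = (a x - a y) ^+ 2 by rewrite -sqrrN opprB.
  lra.
have M1 : 1 <= Num.max 1 B2 by rewrite le_max lexx.
have M2 : B2 <= Num.max 1 B2 by rewrite le_max lexx orbT.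
have h2 : 1 / q y <= K1 * (1 / q x + (a x - a y) ^+ 2 + beta).
  have e1 : beta * Rp + beta * Rv <= beta * Num.max 1 B2.
    by rewrite -mulrDr ler_wpM2l// (le_trans hIq).
  have e2 : 1 / q x <= Num.max 1 B2 * (1 / q x) by rewrite ler_peMl// ltW.
  have e3 : (a x - a y) ^+ 2 <= Num.max 1 B2 * (a x - a y) ^+ 2 by rewrite ler_peMl.
  have e4 : 0 <= beta * Rv by rewrite mulr_ge0// Rint_ge0// => t; exact: sqr_ge0.
  rewrite /K1 -mulrA mulrDr mulrDr [_ * beta]mulrC; lra.
rewrite -div1r ler_pdivrMr//; rewrite ler_pdivrMr// in h2.
by rewrite mulrAC.
Qed.

Lemma intC x :
  (\int[P]_y ((1 / q x + (a x - a y) ^+ 2 + mean P (fun u => (s x u - s y u) ^+ 2))^-1)%:E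
    <= (K1 * B2)%:E)%E.
Proof.
apply: (@le_trans _ _ (\int[P]_y (K1 * q y)%:E)%E).
  apply: le_int_nm => y.
    rewrite lee_fin invr_ge0 /mean; have := q_gt0 x => qx.
    have : 0 <= 1 / q x by rewrite divr_ge0// ltW.
    have := sqr_ge0 (a x - a y).
    have : 0 <= I (fun u => (s x u - s y u) ^+ 2) by apply: Rint_ge0 => u; exact: sqr_ge0.
    lra.
  by rewrite lee_fin; exact: pt_C.
have gK : gd (fun y => K1 * q y) by exact: gd_scal gdq.
rewrite -RintE; [|exact: gK.1|exact: gK.2].
rewrite lee_fin IgZ; last exact: gdq.
by rewrite ler_wpM2l ?Iq_le// /K1 mulr_ge0// (le_trans ler01)// le_max lexx.
Qed.

Lemma SRb (Bp : R) (hB : forall y, `|p y| <= Bp) x : `|SR x| <= sig * Bp.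
Proof.
apply: Rint_bnd.
  move=> y; rewrite normrM; apply: ler_pM => //.
  by have /andP[h1 h2] := hs x y; rewrite ger0_norm.
by apply: measurable_funM => //; exact: sec1.
Qed.

Lemma SVb (Bv : R) (hB : forall y, v y <= Bv) x : SV x <= sig * Bv.
Proof.
apply: le_trans (ler_norm (SV x)) _; apply: Rint_bnd.
  move=> y; rewrite normrM; apply: ler_pM => //.
  - by have /andP[h1 h2] := hs x y; rewrite ger0_norm.
  - by rewrite ger0_norm ?v_ge0.
by apply: measurable_funM => //; exact: sec1.
Qed.

Lemma q_lb2 (kap Kq : R) (hzk : cabs z <= kap) (hK : forall x, q x <= Kq) x :
  1 / ((kap + Ma + sig * (1 + Kq)) ^+ 2 + (kap + sig * (1 + Kq)) ^+ 2 + 1) <= q x.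
Proof.
have hp : forall y, `|p y| <= 1 + Kq.
  move=> y; have := hK y; rewrite /q => h.
  have e : `|p y| ^+ 2 = p y ^+ 2 := real_normK (num_real _).
  have := sqr_ge0 (`|p y| - 1); rewrite sqrrB e mulr1 expr1n.
  have := sqr_ge0 (v y); have := normr_ge0 (p y); lra.
have hv : forall y, v y <= 1 + Kq.
  move=> y; have := hK y; rewrite /q => h.
  have := sqr_ge0 (v y - 1); rewrite sqrrB mulr1 expr1n.
  have := sqr_ge0 (p y); have := sqr_ge0 (v y); lra.
have h := invq x.
have hA : `|complex.Re z + a x + SR x| <= kap + Ma + sig * (1 + Kq).
  rewrite (le_trans (ler_normD _ _))// lerD//; last exact: SRb.
  rewrite (le_trans (ler_normD _ _))// lerD//.
  exact: le_trans (Re_le_cabs _ z) hzk.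
have hB : `|complex.Im z + SV x| <= kap + sig * (1 + Kq).
  rewrite ger0_norm; last by rewrite addr_ge0 ?SV_ge0// ltW.
  rewrite lerD//; last exact: SVb.
  exact: le_trans (ler_norm _) (le_trans (Im_le_cabs _ z) hzk).
have h1 := @sq_le _ _ _ hA; have h2 := @sq_le _ _ _ hB.
apply: inv_le; [exact: q_gt0| |].
  by have := sqr_ge0 (kap + Ma + sig * (1 + Kq)); have := sqr_ge0 (kap + sig * (1 + Kq)); lra.
by rewrite h; lra.
Qed.

Lemma SV_le_v (L : R) (L0 : 0 < L) (hL : forall x, 1 / L <= q x) u : SV u <= L * v u.
Proof.
have h1 := qSV u; have h2 := SV_ge0 u.
have : 1 / L * SV u <= v u.
  by apply: le_trans h1; rewrite ler_wpM2r.
by rewrite mul1r -ler_pdivlMl ?invr_gt0// invrK.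
Qed.

Lemma iter (L : R) (L0 : 0 < L) (hL : forall x, 1 / L <= q x) n :
  forall x, (1 / L) ^+ n.+1 * I (fun y => kpow P s n x y * v y) <= v x.
Proof.
have [kM kB] := @kpow_prop _ _ _ P s ms sig hs n.
have kM1 := @kpow_prop _ _ _ P s ms sig hs n.+1.
elim: n kM kB kM1 => [|n IH] kM kB kM1 x.
  rewrite expr1; apply: le_trans (qSV x); rewrite ler_wpM2r ?SV_ge0//.
have [kM' kB'] := @kpow_prop _ _ _ P s ms sig hs n.
have gk : forall x, gd (kpow P s n x).
  move=> x0; split; first exact: kM'.
  by exists (sig ^+ n.+1) => y; have /andP[h1 h2] := kB' x0 y; rewrite ger0_norm.
have jF : jm (fun y u => kpow P s n x u * s u y * v y).
  apply: jm_mul; last exact: jm_l.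
  by apply: jm_mul; [exact: jm_r|exact: jm_swap].
have kF : kb (fun y u => kpow P s n x u * s u y * v y).
  exists (sig ^+ n.+1 * sig * Mw) => y u.
  have /andP[h1 h2] := kB' x u; have /andP[h3 h4] := hs u y.
  have h5 := v_ge0 y; have h6 := v_le y.
  by rewrite !mulr_ge0//= ler_pM ?mulr_ge0// ler_pM.
have e1 : I (fun y => kpow P s n.+1 x y * v y) =
    I (fun y => I (fun u => kpow P s n x u * s u y * v y)).
  apply: eq_Rintegral => y _ /=; rewrite IgZr//.
  by apply: gd_mul; [exact: gk|split; [exact: sec2|exists sig => u; have /andP[h3 h4] := hs u y; rewrite ger0_norm]].
have e2 : I (fun y => I (fun u => kpow P s n x u * s u y * v y)) =
    I (fun u => kpow P s n x u * SV u).
  rewrite (fub jF kF); apply: eq_Rintegral => u _; rewrite /SV -IgZ.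
    by apply: eq_Rintegral => y _; ring.
  by apply: gd_mul; [exact: gds|exact: gdv].
rewrite e1 e2.
have gSV : gd SV.
  apply: gd_par; first by apply: jm_mul => //; exact: jm_r.
  exists (sig * Mw) => x0 y; have /andP[h1 h2] := hs x0 y.
  by rewrite mulr_ge0 ?v_ge0//= ler_pM ?v_ge0// v_le.
have h1 : I (fun u => kpow P s n x u * SV u) <= L * I (fun u => kpow P s n x u * v u).
  rewrite -IgZ; last exact: gd_mul (gk x) gdv.
  apply: Ig_le; [exact: gd_mul (gk x) gSV|exact: gd_scal (gd_mul (gk x) gdv)|].
  move=> u; have /andP[h2 _] := kB' x u.
  rewrite mulrCA ler_wpM2l//; exact: SV_le_v.
have h2 := IH kM' kB' (@kpow_prop _ _ _ P s ms sig hs n.+1) x.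
apply: le_trans h2.
have h3 : 1 / L * I (fun u => kpow P s n x u * SV u) <= I (fun u => kpow P s n x u * v u).
  apply: le_trans (ler_wpM2l _ h1) _; first by rewrite divr_ge0// ltW.
  by rewrite mulrA mul1r mulVf ?gt_eqF// mul1r.
by rewrite exprSr -mulrA ler_wpM2l// exprn_ge0// divr_ge0// ltW.
Qed.

Lemma final (Kq L cB : R) (K : nat) (hK : forall x, q x <= Kq) (L1' : 1 <= L)
  (hL : forall x, 1 / L <= q x) (K0 : (0 < K)%N) (cB0 : 0 < cB)
  (hB : forall x y, cB <= kpow P s K.-1 x y) :
  (forall x, cabs (w x) <= 1 + Kq + L + Kq * (L + sig * L ^+ K / cB) /\
             1 <= (1 + Kq + L + Kq * (L + sig * L ^+ K / cB)) * cabs (w x)) /\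
  (forall x y, complex.Im (w x) <= (1 + Kq + L + Kq * (L + sig * L ^+ K / cB)) * complex.Im (w y)).
Proof.
set C := 1 + Kq + L + Kq * (L + sig * L ^+ K / cB).
have L0 : 0 < L by exact: lt_le_trans ltr01 L1'.
have Kq0 : 0 <= Kq by exact: le_trans (q_ge0 point) (hK point).
have hS0 : 0 <= sig * L ^+ K / cB.
  by apply: divr_ge0; [apply: mulr_ge0; [exact: sig0|apply: exprn_ge0; exact: ltW]|exact: ltW].
have T0 : 0 <= Kq * (L + sig * L ^+ K / cB).
  by apply: mulr_ge0 => //; apply: addr_ge0 => //; exact: ltW.
have C1 : 1 <= C by rewrite /C; lra.
have CK : Kq <= C by rewrite /C; lra.
have CL : L <= C by rewrite /C; lra.
have C0 : 0 <= C by lra.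
split.
  move=> x; rewrite cabsE -/(p x) -/(v x) -/(q x); split.
    rewrite -(ger0_norm C0) -sqrtr_sqr ler_wsqrtr//.
    apply: le_trans (hK x) (le_trans CK _); rewrite expr2 ler_peMl//.
  rewrite -(ger0_norm C0) -sqrtr_sqr -sqrtrM ?sqr_ge0// -sqrtr1 ler_wsqrtr//.
  have h1 := hL x; have hq := q_ge0 x.
  have : 1 <= L * q x by rewrite -ler_pdivrMl// mulrC.
  move=> h2; apply: le_trans h2 _; rewrite expr2 -mulrA.
  by apply: ler_pM; [exact: ltW|exact: hq|exact: CL|rewrite ler_peMl].
move=> x y; rewrite -/(v x) -/(v y).
have gIv : 0 <= I v by apply: Rint_ge0 => t; exact: v_ge0.
have hSV : SV x <= sig * I v.
  rewrite -IgZ; last exact: gdv.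
  apply: Ig_le; [exact: gd_mul (gds x) gdv|exact: gd_scal gdv|].
  by move=> t; have /andP[h1 h2] := hs x t; rewrite ler_wpM2r ?v_ge0.
have hIm : complex.Im z <= L * v y.
  have h1 : 1 / L * complex.Im z <= v y.
    rewrite veq; apply: le_trans (ler_wpM2r (ltW hz) (hL y)) _.
    by rewrite mulrDr lerDl mulr_ge0 ?q_ge0 ?SV_ge0.
  have -> : complex.Im z = L * (1 / L * complex.Im z) by field; rewrite gt_eqF.
  by rewrite ler_wpM2l// ltW.
set J := I (fun t => kpow P s K.-1 y t * v t).
have hJ1 : (1 / L) ^+ K * J <= v y.
  by have := iter L L0 hL K.-1 y; rewrite prednK.
have e : L ^+ K * (1 / L) ^+ K = 1 by rewrite -exprMn div1r mulfV ?gt_eqF// expr1n.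
have hJ : J <= L ^+ K * v y.
  have -> : J = L ^+ K * ((1 / L) ^+ K * J) by rewrite mulrA e mul1r.
  by rewrite ler_wpM2l// exprn_ge0// ltW.
have h2 : cB * I v <= J.
  have [kM kB] := @kpow_prop _ _ _ P s ms sig hs K.-1.
  rewrite -IgZ; last exact: gdv.
  apply: Ig_le; [exact: gd_scal gdv| |].
    apply: gd_mul; last exact: gdv; split; first exact: kM.
    by exists (sig ^+ K.-1.+1) => t; have /andP[h3 h4] := kB y t; rewrite ger0_norm.
  by move=> t; rewrite ler_wpM2r ?v_ge0.
have hIv : I v <= L ^+ K / cB * v y.
  have -> : I v = cB^-1 * (cB * I v) by rewrite mulrA mulVf ?gt_eqF// mul1r.
  apply: le_trans (ler_wpM2l _ (le_trans h2 hJ)) _; first by rewrite invr_ge0 ltW.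
  by rewrite mulrA [cB^-1 * _]mulrC.
rewrite veq.
have e1 : q x * (complex.Im z + SV x) <= Kq * (L * v y + sig * (L ^+ K / cB * v y)).
  apply: ler_pM; [exact: q_ge0|by rewrite addr_ge0 ?SV_ge0 ?ltW|exact: hK|].
  apply: lerD => //; apply: le_trans hSV _; rewrite ler_wpM2l ?sig0//.
apply: le_trans e1 _.
have -> : Kq * (L * v y + sig * (L ^+ K / cB * v y)) = Kq * (L + sig * L ^+ K / cB) * v y.
  ring.
rewrite ler_wpM2r ?v_ge0// /C; lra.
Qed.

End Fix.

End Helpers.
Import Helpers.
From mathcomp Require Import lra.

Theorem mainTheorem4 (d : measure_display) (X : measurableType d)
  (R : realType) (P : probability X R)
  (a : X -> R) (s : X -> X -> R) (m : R[i] -> X -> R[i]) :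
  (* a in B(X, R) *)
  measurable_fun setT a -> (exists M : R, forall x, `|a x| <= M) ->
  (* s in B(X^2, [0, oo)) symmetric *)
  good_kernel s ->
  (* m : H -> B(X, H) solves -1/m(z) = z + a + S m(z) *)
  (forall z : R[i], in_H z ->
     bounded_meas (m z) /\ (forall x, in_H (m z x)) /\
     (forall x, - (m z x)^-1 = z + (a x)%:C%C + Sop P s (m z) x)) ->
  assumptionA P s -> assumptionB P s -> assumptionC P a s ->
  exists C : R, 0 < C /\
    (forall (z : R[i]) (x : X), in_H z -> cabs z <= 2 * kappa P a s ->
        cabs (m z x) <= C /\ 1 <= C * cabs (m z x)) /\
    (forall (z : R[i]) (x y : X), in_H z -> cabs z <= 2 * kappa P a s ->
        complex.Im (m z x) <= C * complex.Im (m z y)).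
Proof.
move=> ma [Ma hMa] [ms [[Ms hMs] [s0 ssym]]] hm.
move=> [r [[mr [[rM hrM] [r0 rsym]]] [hrs [c [c0 hc]]]]] [K [K0 [cB [cB0 hKB]]]] hC.
have hs : forall x y, 0 <= s x y <= Ms.
  by move=> x y; rewrite s0/=; apply: le_trans (ler_norm _) (hMs x y).
have hr : forall x y, 0 <= r x y <= rM.
  by move=> x y; rewrite r0/=; apply: le_trans (ler_norm _) (hrM x y).
set B2 := 1 / c ^+ 2.
set K1 := 4 * Num.max 1 B2.
have [del [del0 hdel]] := hC (K1 * B2 + 1).
set Kq := 1 / del.
set kap := 2 * kappa P a s.
set L := (kap + Ma + Ms * (1 + Kq)) ^+ 2 + (kap + Ms * (1 + Kq)) ^+ 2 + 1.
have Kq0 : 0 <= Kq by rewrite divr_ge0// ltW.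
have Ms0 : 0 <= Ms by have /andP[h1 h2] := hs point point; exact: le_trans h2.
have L1 : 1 <= L.
  by rewrite /L; have := sqr_ge0 (kap + Ma + Ms * (1 + Kq)); have := sqr_ge0 (kap + Ms * (1 + Kq)); lra.
set C := 1 + Kq + L + Kq * (L + Ms * L ^+ K / cB).
have key : forall z, in_H z -> cabs z <= kap ->
  (forall x, cabs (m z x) <= C /\ 1 <= C * cabs (m z x)) /\
  (forall x y, complex.Im (m z x) <= C * complex.Im (m z y)).
  move=> z hz hzk.
  have [[mp [mv [Mw hMw]]] [hH heq]] := hm z hz.
  have hK : forall x, complex.Re (m z x) ^+ 2 + complex.Im (m z x) ^+ 2 <= Kq.
    move=> x.
    have qx : 0 < complex.Re (m z x) ^+ 2 + complex.Im (m z x) ^+ 2.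
      have := sqr_ge0 (complex.Re (m z x)).
      have : 0 < complex.Im (m z x) ^+ 2 by apply: exprn_gt0; exact: hH.
      lra.
    have [h|h] := ltP (1 / (complex.Re (m z x) ^+ 2 + complex.Im (m z x) ^+ 2)) del.
      exfalso.
      have h1 := hdel _ (divr_gt0 ltr01 qx) h x.
      have h2 := intC P a Ma hMa ms Ms hs z (m z) hz mp mv Mw hMw hH heq mr rM hr rsym hrs c c0 hc x.
      have := le_trans h1 h2; rewrite lee_fin /K1 /B2; lra.
    rewrite /Kq ler_pdivlMr// mulrC.
    by rewrite ler_pdivlMr// in h.
  have hL : forall x, 1 / L <= complex.Re (m z x) ^+ 2 + complex.Im (m z x) ^+ 2.
    move=> x; exact: (q_lb2 P a Ma hMa ms Ms hs z (m z) hz mp mv hH heq kap Kq hzk hK x).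
  exact: (final P a ms Ms hs z (m z) hz mv Mw hMw hH heq Kq L cB K hK L1 hL K0 cB0 hKB).
exists C; split.
  by rewrite /C; have := mulr_ge0 Kq0 (addr_ge0 (ltW (lt_le_trans ltr01 L1))
    (divr_ge0 (mulr_ge0 Ms0 (exprn_ge0 K (ltW (lt_le_trans ltr01 L1)))) (ltW cB0))); lra.
split.
  by move=> z x hz hzk; have [h _] := key z hz hzk; exact: h.
by move=> z x y hz hzk; have [_ h] := key z hz hzk; exact: h.
Qed.
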